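(* Let $\mathbf{M}$ be a right proper model category in which the terminal object $\ast$ is cofibrant, and let $Y$ be an object of $\mathbf{M}$. Then the function $\psi_Y:\pi_0(\mathbf{Triv}/Y)\to[\ast,Y]$, sending an object $W\to Y$ to the composite $\ast\xleftarrow{\simeq}W\to Y$ in the homotopy category $\mathrm{Ho}(\mathbf{M})$, is a bijection.
   Context: $\mathbf{Triv}/Y$ is the category whose objects are morphisms $W\to Y$ of $\mathbf{M}$ such that $W\to\ast$ is a weak equivalence, and whose morphisms are commutative triangles over $Y$; $\pi_0$ denotes the set of path components; $[\ast,Y]$ is the set of morphisms in $\mathrm{Ho}(\mathbf{M})$. Right proper means weak equivalences are stable under pullback along fibrations. *)

(* Defs.v *)
From Stdlib Require Import Relations.
Set Implicit Arguments.
Unset Strict Implicit.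

Record Category := {
  Ob :> Type;
  Hom : Ob -> Ob -> Type;
  idm : forall a, Hom a a;
  comp : forall a b c, Hom b c -> Hom a b -> Hom a c;
  comp_id_l : forall a b (f : Hom a b), comp (idm b) f = f;
  comp_id_r : forall a b (f : Hom a b), comp f (idm a) = f;
  comp_assoc : forall a b c d (f : Hom a b) (g : Hom b c) (h : Hom c d),
      comp h (comp g f) = comp (comp h g) f
}.
Arguments Hom {C} a b : rename.
Arguments idm {C} a : rename.
Arguments comp {C a b c} g f : rename.

Section Limits.
Variable C : Category.

Definition is_terminal (t : C) : Prop :=
  forall a : C, exists f : Hom a t, forall g : Hom a t, g = f.
Definition is_initial (i : C) : Prop :=
  forall a : C, exists f : Hom i a, forall g : Hom i a, g = f.

Definition is_pullback (a b c P : C) (f : Hom a c) (g : Hom b c)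
  (p1 : Hom P a) (p2 : Hom P b) : Prop :=
  comp f p1 = comp g p2 /\
  forall (Q : C) (q1 : Hom Q a) (q2 : Hom Q b), comp f q1 = comp g q2 ->
    exists u : Hom Q P, comp p1 u = q1 /\ comp p2 u = q2 /\
      forall v : Hom Q P, comp p1 v = q1 -> comp p2 v = q2 -> v = u.

Definition is_pushout (a b c P : C) (f : Hom c a) (g : Hom c b)
  (i1 : Hom a P) (i2 : Hom b P) : Prop :=
  comp i1 f = comp i2 g /\
  forall (Q : C) (q1 : Hom a Q) (q2 : Hom b Q), comp q1 f = comp q2 g ->
    exists u : Hom P Q, comp u i1 = q1 /\ comp u i2 = q2 /\
      forall v : Hom P Q, comp v i1 = q1 -> comp v i2 = q2 -> v = u.

Definition is_retract (a b c d : C) (f : Hom a b) (g : Hom c d) : Prop :=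
  exists (i : Hom a c) (r : Hom c a) (j : Hom b d) (s : Hom d b),
    comp r i = idm a /\ comp s j = idm b /\
    comp g i = comp j f /\ comp f r = comp s g.

Definition llp (a b x y : C) (i : Hom a b) (p : Hom x y) : Prop :=
  forall (u : Hom a x) (v : Hom b y), comp p u = comp v i ->
    exists h : Hom b x, comp h i = u /\ comp p h = v.
End Limits.

Definition MorClass (C : Category) := forall a b : C, Hom a b -> Prop.

Record ModelCategory (C : Category) := {
  weq : MorClass C;
  fib : MorClass C;
  cof : MorClass C;
  has_terminal : exists t : C, is_terminal t;
  has_initial : exists i : C, is_initial i;
  has_pullbacks : forall (a b c : C) (f : Hom a c) (g : Hom b c),
      exists (P : C) (p1 : Hom P a) (p2 : Hom P b), is_pullback f g p1 p2;
  has_pushouts : forall (a b c : C) (f : Hom c a) (g : Hom c b),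
      exists (P : C) (i1 : Hom a P) (i2 : Hom b P), is_pushout f g i1 i2;
  weq_id : forall a, weq (idm a);
  fib_id : forall a, fib (idm a);
  cof_id : forall a, cof (idm a);
  weq_comp : forall a b c (f : Hom a b) (g : Hom b c),
      weq f -> weq g -> weq (comp g f);
  fib_comp : forall a b c (f : Hom a b) (g : Hom b c),
      fib f -> fib g -> fib (comp g f);
  cof_comp : forall a b c (f : Hom a b) (g : Hom b c),
      cof f -> cof g -> cof (comp g f);
  weq_2of3_l : forall a b c (f : Hom a b) (g : Hom b c),
      weq g -> weq (comp g f) -> weq f;
  weq_2of3_r : forall a b c (f : Hom a b) (g : Hom b c),
      weq f -> weq (comp g f) -> weq g;
  weq_retract : forall a b c d (f : Hom a b) (g : Hom c d),
      is_retract f g -> weq g -> weq f;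
  fib_retract : forall a b c d (f : Hom a b) (g : Hom c d),
      is_retract f g -> fib g -> fib f;
  cof_retract : forall a b c d (f : Hom a b) (g : Hom c d),
      is_retract f g -> cof g -> cof f;
  lift_cof_trivfib : forall a b x y (i : Hom a b) (p : Hom x y),
      cof i -> fib p -> weq p -> llp i p;
  lift_trivcof_fib : forall a b x y (i : Hom a b) (p : Hom x y),
      cof i -> weq i -> fib p -> llp i p;
  fact_trivcof_fib : forall a b (f : Hom a b),
      exists (z : C) (i : Hom a z) (p : Hom z b),
        cof i /\ weq i /\ fib p /\ comp p i = f;
  fact_cof_trivfib : forall a b (f : Hom a b),
      exists (z : C) (i : Hom a z) (p : Hom z b),
        cof i /\ fib p /\ weq p /\ comp p i = f
}.
Arguments weq {C} M {a b} f : rename.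
Arguments fib {C} M {a b} f : rename.
Arguments cof {C} M {a b} f : rename.

Definition right_proper (C : Category) (M : ModelCategory C) : Prop :=
  forall (a b c P : C) (f : Hom a c) (g : Hom b c) (p1 : Hom P a) (p2 : Hom P b),
    is_pullback f g p1 p2 -> weq M f -> fib M g -> weq M p2.

Definition cofibrant (C : Category) (M : ModelCategory C) (X : C) : Prop :=
  forall (i : C) (f : Hom i X), is_initial i -> cof M f.

(* Morphisms of the localization: zigzags of morphisms of C and formal
   inverses of weak equivalences (read left to right), modulo the
   congruence generated by the composition law of C, identities, and
   w^-1 w = id, w w^-1 = id (Gabriel--Zisman). *)
Section Localization.
Variables (C : Category) (M : ModelCategory C).

Inductive Zig : C -> C -> Type :=
| znil : forall a, Zig a a
| zfwd : forall a b c, Hom a b -> Zig b c -> Zig a c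
| zbwd : forall a b c (w : Hom b a), weq M w -> Zig b c -> Zig a c.

Inductive zstep : forall a c, Zig a c -> Zig a c -> Prop :=
| zs_id : forall a c (r : Zig a c), zstep (zfwd (idm a) r) r
| zs_comp : forall a b c d (f : Hom a b) (g : Hom b c) (r : Zig c d),
    zstep (zfwd f (zfwd g r)) (zfwd (comp g f) r)
| zs_inv_l : forall a b c (w : Hom b a) (H : weq M w) (r : Zig a c),
    zstep (zbwd H (zfwd w r)) r
| zs_inv_r : forall a b c (w : Hom b a) (H : weq M w) (r : Zig b c),
    zstep (zfwd w (zbwd H r)) r
| zs_prf : forall a b c (w : Hom b a) (H H' : weq M w) (r : Zig b c),
    zstep (zbwd H r) (zbwd H' r)
| zs_cong_fwd : forall a b c (f : Hom a b) (r r' : Zig b c),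
    zstep r r' -> zstep (zfwd f r) (zfwd f r')
| zs_cong_bwd : forall a b c (w : Hom b a) (H : weq M w) (r r' : Zig b c),
    zstep r r' -> zstep (zbwd H r) (zbwd H r').

Definition ho_eq (a c : C) : relation (Zig a c) :=
  clos_refl_sym_trans _ (@zstep a c).
End Localization.

Section Triv.
Variables (C : Category) (M : ModelCategory C) (t : C) (Y : C).

(* an object of Triv/Y : W -> Y with W -> * (t terminal) a weak equivalence *)
Record TrivObj := {
  tw_ob : C;
  tw_to_pt : Hom tw_ob t;
  tw_weq : weq M tw_to_pt;
  tw_map : Hom tw_ob Y
}.

Definition triv_hom (o1 o2 : TrivObj) : Prop :=
  exists h : Hom (tw_ob o1) (tw_ob o2), comp (tw_map o2) h = tw_map o1.

(* same path component: equivalence relation generated by morphisms *)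
Definition triv_connected : relation TrivObj :=
  clos_refl_sym_trans _ triv_hom.

Definition psi (o : TrivObj) : Zig M t Y :=
  zbwd (tw_weq o) (zfwd (tw_map o) (znil M Y)).
End Triv.

(* Main.v *)
Require Import Defs.
From Stdlib Require Import Relations.
Set Implicit Arguments.
Unset Strict Implicit.

Fixpoint Act (C : Category) (M : ModelCategory C) (t : C) (a c : C) (z : Zig M a c)
  {struct z} : TrivObj M t a -> TrivObj M t c -> Prop :=
  match z in @Zig _ _ a c return TrivObj M t a -> TrivObj M t c -> Prop with
  | @znil _ _ a => fun o x => x = o
  | @zfwd _ _ a b c f r => fun o x =>
      @Act C M t _ _ r (Build_TrivObj (tw_weq o) (comp f (tw_map o))) x
  | @zbwd _ _ a b c v Hv r => fun o x =>
      exists (E : C) (k : Hom (tw_ob o) E) (pi : Hom E a) (P : C)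
        (p1 : Hom P b) (p2 : Hom P E) (u : Hom P t) (Hu : weq M u),
        cof M k /\ weq M k /\ fib M pi /\ comp pi k = tw_map o /\
        is_pullback v pi p1 p2 /\ @Act C M t _ _ r (Build_TrivObj Hu p1) x
  end.

Arguments Act {C M t a c} z _ _.

Lemma term_uniq (C : Category) (t : C) (Ht : is_terminal t) (a : C) (f g : Hom a t) :
  f = g.
Proof. destruct (Ht a) as [h Hh]. rewrite (Hh f), (Hh g). reflexivity. Qed.

Lemma ActA (C : Category) (M : ModelCategory C) (t : C) :
  forall a c (z : Zig M a c) (o1 o2 : TrivObj M t a) x1 x2,
  triv_hom o1 o2 -> Act z o1 x1 -> Act z o2 x2 -> triv_connected x1 x2.
Proof.
  induction z as [a|a b c f r IH|a b c v Hv r IH]; intros o1 o2 x1 x2 Hh A1 A2; simpl in *.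
  - subst. apply rst_step. exact Hh.
  - eapply IH; [|exact A1|exact A2].
    destruct Hh as [h Hh]. exists h. simpl.
    rewrite <- comp_assoc, Hh. reflexivity.
  - destruct A1 as (E1 & k1 & pi1 & P1 & q1 & r1 & u1 & Hu1 & Hc1 & Hw1 & Hf1 & Hk1 & Hpb1 & A1).
    destruct A2 as (E2 & k2 & pi2 & P2 & q2 & r2 & u2 & Hu2 & Hc2 & Hw2 & Hf2 & Hk2 & Hpb2 & A2).
    destruct Hh as [h Hh].
    assert (Hsq : comp pi2 (comp k2 h) = comp pi1 k1).
    { rewrite comp_assoc, Hk2, Hh, Hk1. reflexivity. }
    destruct (lift_trivcof_fib Hc1 Hw1 Hf2 Hsq) as [hh [Hhh1 Hhh2]].
    destruct Hpb1 as [Heq1 _]. destruct Hpb2 as [_ U2].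
    assert (Hq : comp v q1 = comp pi2 (comp hh r1)).
    { rewrite Heq1, comp_assoc, Hhh2. reflexivity. }
    destruct (U2 _ _ _ Hq) as [uu [Huu _]].
    eapply IH; [|exact A1|exact A2].
    exists uu. simpl. exact Huu.
Qed.

Lemma triv_hom_id (C : Category) (M : ModelCategory C) (t Y : C) (o : TrivObj M t Y) :
  triv_hom o o.
Proof. exists (idm _). apply comp_id_r. Qed.

Lemma construct (C : Category) (M : ModelCategory C) (t : C)
  (Ht : is_terminal t) (Hrp : right_proper M)
  (W : C) (w : Hom W t) (Hw : weq M w) (a : C) (f : Hom W a) (b : C)
  (v : Hom b a) (Hv : weq M v) :
  exists (E : C) (k : Hom W E) (pi : Hom E a) (e : Hom E t) (P : C)
    (p1 : Hom P b) (p2 : Hom P E),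
    cof M k /\ weq M k /\ fib M pi /\ comp pi k = f /\ comp e k = w /\
    weq M e /\ is_pullback v pi p1 p2 /\ weq M p2.
Proof.
  destruct (fact_trivcof_fib M f) as (E & k & pi & Hc & Hwk & Hf & Hk).
  destruct (Ht E) as [e _].
  destruct (has_pullbacks M v pi) as (P & p1 & p2 & Hpb).
  assert (Hek : comp e k = w) by apply (term_uniq Ht).
  exists E, k, pi, e, P, p1, p2.
  repeat split; try assumption.
  - apply (@weq_2of3_r _ M _ _ _ k e); [assumption| rewrite Hek; assumption].
  - destruct Hpb; assumption.
  - destruct Hpb; assumption.
  - exact (Hrp _ _ _ _ v pi p1 p2 Hpb Hv Hf).
Qed.

Lemma ActB (C : Category) (M : ModelCategory C) (t : C)
  (Ht : is_terminal t) (Hrp : right_proper M) :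
  forall a c (z : Zig M a c) (o : TrivObj M t a), exists x, Act z o x.
Proof.
  induction z as [a|a b c f r IH|a b c v Hv r IH]; intros o; simpl.
  - exists o. reflexivity.
  - apply IH.
  - destruct (construct Ht Hrp (tw_weq o) (tw_map o) Hv)
      as (E & k & pi & e & P & p1 & p2 & Hc & Hwk & Hf & Hk & Hek & He & Hpb & Hp2).
    pose (Hu := @weq_comp _ M _ _ _ p2 e Hp2 He).
    destruct (IH (Build_TrivObj Hu p1)) as [x Hx].
    exists x, E, k, pi, P, p1, p2, (comp e p2), Hu. exact (conj Hc (conj Hwk (conj Hf (conj Hk (conj Hpb Hx))))).
Qed.

Lemma ActA' (C : Category) (M : ModelCategory C) (t : C)
  (Ht : is_terminal t) (Hrp : right_proper M) :
  forall a c (z : Zig M a c) (o1 o2 : TrivObj M t a),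
  triv_connected o1 o2 -> forall x1 x2,
  Act z o1 x1 -> Act z o2 x2 -> triv_connected x1 x2.
Proof.
  intros a c z o1 o2 Hc. induction Hc as [o1 o2 H|o|o1 o2 H IH|o1 o2 o3 H1 IH1 H2 IH2];
    intros x1 x2 A1 A2.
  - exact (ActA H A1 A2).
  - exact (ActA (triv_hom_id o) A1 A2).
  - apply rst_sym. exact (IH _ _ A2 A1).
  - destruct (ActB Ht Hrp z o2) as [xm Am].
    eapply rst_trans; [exact (IH1 _ _ A1 Am)|exact (IH2 _ _ Am A2)].
Qed.

Lemma step_inv (C : Category) (M : ModelCategory C) (t : C)
  (Ht : is_terminal t) (Hrp : right_proper M) :
  forall a c (z z' : Zig M a c), zstep z z' ->
  forall (o : TrivObj M t a) x x', Act z o x -> Act z' o x' -> triv_connected x x'.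
Proof.
  induction 1; intros o x x' A1 A2; simpl in *.
  - eapply (ActA' Ht Hrp); [|exact A1|exact A2].
    apply rst_step. exists (idm _). simpl. rewrite comp_id_r, comp_id_l. reflexivity.
  - eapply (ActA' Ht Hrp); [|exact A1|exact A2].
    apply rst_step. exists (idm _). simpl. rewrite comp_id_r, comp_assoc. reflexivity.
  - destruct A1 as (E & k & pi & P & p1 & p2 & u & Hu & Hc & Hwk & Hf & Hk & Hpb & A1).
    simpl in A1.
    destruct (Ht E) as [e _].
    assert (Hek : comp e k = tw_to_pt o) by apply (term_uniq Ht).
    assert (He : weq M e).
    { apply (@weq_2of3_r _ M _ _ _ k e); [assumption| rewrite Hek; apply tw_weq]. }
    pose (oE := Build_TrivObj (M:=M) He pi).
    eapply (ActA' Ht Hrp); [|exact A1|exact A2].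
    apply rst_trans with oE.
    + apply rst_step. exists p2. simpl. destruct Hpb as [Hq _]. symmetry; exact Hq.
    + apply rst_sym, rst_step. exists k. simpl. exact Hk.
  - destruct A1 as (E & k & pi & P & p1 & p2 & u & Hu & Hc & Hwk & Hf & Hk & Hpb & A1).
    simpl in Hk.
    destruct Hpb as [_ U].
    destruct (U _ (tw_map o) k (eq_sym Hk)) as [uu [Huu _]].
    eapply (ActA' Ht Hrp); [|exact A1|exact A2].
    apply rst_sym, rst_step. exists uu. simpl. exact Huu.
  - exact (ActA' Ht Hrp (z := zbwd H r) (rst_refl _ _ o) A1 A2).
  - eapply IHzstep; [exact A1|exact A2].
  - destruct A1 as (E & k & pi & P & p1 & p2 & u & Hu & Hc & Hwk & Hf & Hk & Hpb & A1).
    destruct A2 as (E' & k' & pi' & P' & p1' & p2' & u' & Hu' & Hc' & Hwk' & Hf' & Hk' & Hpb' & A2).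
    assert (Hoo : triv_connected (Build_TrivObj Hu p1) (Build_TrivObj Hu' p1')).
    { apply (ActA (triv_hom_id o) (z := zbwd H (znil M _))).
      - exists E, k, pi, P, p1, p2, u, Hu. exact (conj Hc (conj Hwk (conj Hf (conj Hk (conj Hpb eq_refl))))).
      - exists E', k', pi', P', p1', p2', u', Hu'. exact (conj Hc' (conj Hwk' (conj Hf' (conj Hk' (conj Hpb' eq_refl))))). }
    destruct (ActB Ht Hrp r' (Build_TrivObj Hu p1)) as [xm Am].
    eapply rst_trans; [exact (IHzstep _ _ _ A1 Am)|].
    exact (ActA' Ht Hrp Hoo Am A2).
Qed.

Lemma ho_inv (C : Category) (M : ModelCategory C) (t : C)
  (Ht : is_terminal t) (Hrp : right_proper M) :
  forall a c (z z' : Zig M a c), ho_eq z z' ->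
  forall (o : TrivObj M t a) x x', Act z o x -> Act z' o x' -> triv_connected x x'.
Proof.
  intros a c z z' H. unfold ho_eq in H.
  induction H as [z z' H|z|z z' H IH|z1 z2 z3 H1 IH1 H2 IH2]; intros o x x' A1 A2.
  - exact (step_inv Ht Hrp H A1 A2).
  - exact (ActA' Ht Hrp (rst_refl _ _ o) A1 A2).
  - apply rst_sym. exact (IH _ _ _ A2 A1).
  - destruct (ActB Ht Hrp z2 o) as [xm Am].
    eapply rst_trans; [exact (IH1 _ _ _ A1 Am)|exact (IH2 _ _ _ Am A2)].
Qed.

Section Alg.
Lemma hs (C : Category) (M : ModelCategory C) a c (r r' : Zig M a c) :
  zstep r r' -> ho_eq r r'.
Proof. apply rst_step. Qed.
Lemma ht (C : Category) (M : ModelCategory C) a c (r1 r2 r3 : Zig M a c) :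
  ho_eq r1 r2 -> ho_eq r2 r3 -> ho_eq r1 r3.
Proof. apply rst_trans. Qed.
Lemma hsy (C : Category) (M : ModelCategory C) a c (r1 r2 : Zig M a c) :
  ho_eq r1 r2 -> ho_eq r2 r1.
Proof. apply rst_sym. Qed.
Lemma hf (C : Category) (M : ModelCategory C) a b c (f : Hom a b) (r r' : Zig M b c) :
  ho_eq r r' -> ho_eq (zfwd f r) (zfwd f r').
Proof.
  induction 1. apply rst_step, zs_cong_fwd; assumption. apply rst_refl.
  apply rst_sym; assumption. eapply rst_trans; eassumption.
Qed.
Lemma hb (C : Category) (M : ModelCategory C) a b c (w : Hom b a) (H : weq M w)
  (r r' : Zig M b c) :
  ho_eq r r' -> ho_eq (zbwd H r) (zbwd H r').
Proof.
  induction 1. apply rst_step, zs_cong_bwd; assumption. apply rst_refl.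
  apply rst_sym; assumption. eapply rst_trans; eassumption.
Qed.
End Alg.

Lemma L1 (C : Category) (M : ModelCategory C) a b d c (h : Hom a b) (g : Hom b d)
  (X : Zig M d c) :
  ho_eq (zfwd (comp g h) X) (zfwd h (zfwd g X)).
Proof. apply hsy, hs, zs_comp. Qed.

Lemma L2 (C : Category) (M : ModelCategory C) W E T c (k : Hom W E) (e : Hom E T)
  (Hw : weq M (comp e k)) (He : weq M e) (X : Zig M E c) :
  ho_eq (zbwd Hw (zfwd k X)) (zbwd He X).
Proof.
  eapply ht. apply hb, hf, hsy, hs, (zs_inv_r He X).
  eapply ht. apply hb, hs, zs_comp.
  apply hs, zs_inv_l.
Qed.

Lemma L3 (C : Category) (M : ModelCategory C) P E a b c (pi : Hom E a) (v : Hom b a)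
  (p1 : Hom P b) (p2 : Hom P E) (Hv : weq M v) (Hp2 : weq M p2) (X : Zig M b c) :
  comp v p1 = comp pi p2 ->
  ho_eq (zfwd pi (zbwd Hv X)) (zbwd Hp2 (zfwd p1 X)).
Proof.
  intro Hq. apply hsy.
  eapply ht. apply hb, hf, hsy, hs, (zs_inv_r Hv X).
  eapply ht. apply hb, hs, zs_comp.
  rewrite Hq.
  eapply ht. apply hb, hsy, hs, zs_comp.
  apply hs, zs_inv_l.
Qed.

Lemma L4 (C : Category) (M : ModelCategory C) P E T c (p2 : Hom P E) (e : Hom E T)
  (He : weq M e) (Hp2 : weq M p2) (Hu : weq M (comp e p2)) (X : Zig M P c) :
  ho_eq (zbwd He (zbwd Hp2 X)) (zbwd Hu X).
Proof.
  eapply ht. apply hsy, hs, (zs_inv_l Hu (zbwd He (zbwd Hp2 X))).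
  eapply ht. apply hb, L1.
  eapply ht. apply hb, hf, hs, zs_inv_r.
  apply hb, hs, zs_inv_r.
Qed.

Lemma surj_gen (C : Category) (M : ModelCategory C) (t : C)
  (Ht : is_terminal t) (Hrp : right_proper M) :
  forall a c (z : Zig M a c) (o : TrivObj M t a),
  exists x : TrivObj M t c, ho_eq (zbwd (tw_weq o) (zfwd (tw_map o) z)) (psi x).
Proof.
  induction z as [a|a b c f r IH|a b c v Hv r IH]; intros o.
  - exists o. apply rst_refl.
  - destruct (IH (Build_TrivObj (tw_weq o) (comp f (tw_map o)))) as [x Hx].
    exists x. eapply ht; [|exact Hx]. simpl. apply hb, hs, zs_comp.
  - destruct o as [W w Hw m]. simpl.
    destruct (construct Ht Hrp Hw m Hv)
      as (E & k & pi & e & P & p1 & p2 & Hc & Hwk & Hf & Hk & Hek & He & Hpb & Hp2).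
    pose (Hu := @weq_comp _ M _ _ _ p2 e Hp2 He).
    destruct (IH (Build_TrivObj Hu p1)) as [x Hx].
    exists x. eapply ht; [|exact Hx]. simpl.
    subst m w.
    eapply ht. apply hb, L1.
    eapply ht. apply L2 with (He := He).
    eapply ht. apply hb, L3 with (Hp2 := Hp2). destruct Hpb as [Hq _]; exact Hq.
    apply L4.
Qed.

Theorem mainTheorem14 (C : Category) (M : ModelCategory C) (t : C)
  (Ht : is_terminal t) (Hrp : right_proper M) (Hcof : cofibrant M t) (Y : C) :
  (forall o1 o2 : TrivObj M t Y,
      triv_connected o1 o2 -> ho_eq (psi o1) (psi o2)) /\
  (forall o1 o2 : TrivObj M t Y,
      ho_eq (psi o1) (psi o2) -> triv_connected o1 o2) /\
  (forall z : Zig M t Y, exists o : TrivObj M t Y, ho_eq (psi o) z).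
Proof.
  pose (o0 := Build_TrivObj (weq_id M t) (idm t)).
  split; [|split].
  - intros o1 o2 Hc. induction Hc as [o1 o2 Hh|o|o1 o2 H IH|o1 o2 o3 H1 IH1 H2 IH2].
    + destruct Hh as [h Hh].
      destruct o1 as [W1 w1 H1 m1], o2 as [W2 w2 H2 m2]. simpl in *.
      assert (Hw : comp w2 h = w1) by apply (term_uniq Ht).
      subst m1 w1. unfold psi; simpl.
      eapply ht. apply hb, L1.
      apply L2.
    + apply rst_refl.
    + apply hsy; exact IH.
    + eapply ht; eassumption.
  - intros o1 o2 Hh.
    destruct (ActB Ht Hrp (psi o1) o0) as [x1 A1].
    destruct (ActB Ht Hrp (psi o2) o0) as [x2 A2].
    pose proof (ho_inv Ht Hrp Hh A1 A2) as Hx.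
    assert (Hfin : forall o x : TrivObj M t Y, Act (psi o) o0 x -> triv_hom x o).
    { intros o x A. simpl in A.
      destruct A as (E & k & pi & P & p1 & p2 & u & Hu & _ & _ & _ & _ & _ & A).
      simpl in A. subst x. exists p1. reflexivity. }
    eapply rst_trans. apply rst_sym, rst_step, (Hfin _ _ A1).
    eapply rst_trans. exact Hx. apply rst_step, (Hfin _ _ A2).
  - intros z. destruct (surj_gen Ht Hrp z o0) as [x Hx].
    exists x. apply hsy. eapply ht; [|exact Hx].
    apply hsy, hs. simpl. apply (zs_inv_l (weq_id M t) z).
Qed.
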